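(* Let $q\neq-1$ be real and $n\ge1$. Then $T_n(x,s,q)$ is the weight of the set of all tilings of an $n$-board whose last tile (the tile covering cell $n$) is either a white square or a domino. Consequently, for $n>0$, $$T_n(x,s,q)=x\,U_{n-1}(x,s,q)+q^{n-1}s\,U_{n-2}(x,s,q).$$
   Context: $T_0=1$, $T_1=x$, $T_n(x,s,q)=(1+q^{n-1})x\,T_{n-1}(x,s,q)+q^{n-1}s\,T_{n-2}(x,s,q)$ for $n\ge2$; $U_{-1}=0$, $U_0=1$, $U_n(x,s,q)=(1+q^{n})x\,U_{n-1}(x,s,q)+q^{n-1}s\,U_{n-2}(x,s,q)$ for $n\ge1$. An $n$-board is a $1\times n$ rectangle with cells $1,\dots,n$, tiled by white squares, black squares (one cell each) and dominoes (two adjacent cells). Weight: white square $x$; black square at cell $i$: $q^ix$; domino covering cells $i-1,i$: $q^{i-1}s$; a tiling's weight is the product of its tiles' weights and a set's weight is the sum over its elements. *)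

(* Defs.v *)
From HB Require Import structures.
From mathcomp Require Import all_boot all_order all_algebra.
Set Implicit Arguments. Unset Strict Implicit. Unset Printing Implicit Defensive.
Import Order.TTheory GRing.Theory Num.Theory.
Local Open Scope ring_scope.

Inductive tile := White | Black | Domino.

Definition tile_code (t : tile) : 'I_3 :=
  match t with White => inord 0 | Black => inord 1 | Domino => inord 2 end.
Definition tile_decode (i : 'I_3) : tile :=
  match val i with 0 => White | 1 => Black | _ => Domino end.
Lemma tile_codeK : cancel tile_code tile_decode.
Proof. by case; rewrite /tile_decode /= inordK. Qed.
HB.instance Definition _ := Countable.copy tile (can_type tile_codeK).
HB.instance Definition _ := Finite.copy tile (can_type tile_codeK).

Definition tile_len (t : tile) : nat := if t is Domino then 2 else 1.
Definition tiles_len (s : seq tile) : nat := sumn (map tile_len s).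

Section Weights.
Variable R : pzRingType.
Variables x s q : R.

(* weight of the tiling (sequence of tiles, left to right) placed after the
   first [off] cells: white square -> x; black square at cell i -> q^i x;
   domino covering cells i-1,i -> q^(i-1) s. *)
Fixpoint tiling_weight_from (off : nat) (t : seq tile) : R :=
  match t with
  | [::] => 1
  | White :: t' => x * tiling_weight_from off.+1 t'
  | Black :: t' => q ^+ off.+1 * x * tiling_weight_from off.+1 t'
  | Domino :: t' => q ^+ off.+1 * s * tiling_weight_from off.+2 t'
  end.

Definition tiling_weight (t : seq tile) : R := tiling_weight_from 0 t.

(* Weight of the set of tilings of an n-board satisfying P: a tiling of an
   n-board has at most n tiles, so we sum over all k-tuples of tiles, k <= n,
   covering exactly n cells. *)
Definition board_weight (n : nat) (P : seq tile -> bool) : R :=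
  \sum_(k < n.+1) \sum_(t : k.-tuple tile | (tiles_len t == n) && P t)
     tiling_weight t.

Fixpoint Tpoly (n : nat) : R :=
  match n with
  | 0 => 1
  | 1 => x
  | (k.+1 as m).+1 => (1 + q ^+ m) * x * Tpoly m + q ^+ m * s * Tpoly k
  end.

(* Uaux k = U_{k-1} *)
Fixpoint Uaux (k : nat) : R :=
  match k with
  | 0 => 0
  | 1 => 1
  | (j.+1 as m).+1 => (1 + q ^+ m) * x * Uaux m + q ^+ j * s * Uaux j
  end.

(* U_m for integer m >= -1 (U_{-1} = 0; other negative indices unused, set to 0) *)
Definition Upoly (m : int) : R :=
  match m with Posz n => Uaux n.+1 | Negz _ => 0 end.
End Weights.

Definition last_white_or_domino (t : seq tile) : bool :=
  match rev t with White :: _ | Domino :: _ => true | _ => false end.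

(* Main.v *)
Require Import Defs.
From HB Require Import structures.
From mathcomp Require Import all_boot all_order all_algebra.
From mathcomp Require Import reals ring zify.
Import Order.TTheory GRing.Theory Num.Theory.
Local Open Scope ring_scope.

Lemma perm_tile : perm_eq (index_enum tile) [:: White; Black; Domino].
Proof.
have h : forall a b : tile, a <> b -> (a == b) = false by move=> a b /eqP/negbTE.
apply: uniq_perm.
- exact: index_enum_uniq.
- by rewrite /= !inE !h.
- by move=> a; rewrite mem_index_enum !inE; case: a; rewrite eqxx ?orbT.
Qed.

Lemma sum_tile (R : realType) (F : tile -> R) :
  \sum_(a : tile) F a = F White + F Black + F Domino.
Proof.
rewrite (perm_big _ perm_tile) !big_cons big_nil /=.
by rewrite addr0 addrA.
Qed.

Section Main.
Variable R : realType.
Variables x s q : R.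

Definition tw (o : nat) (a : tile) : R :=
  match a with White => x | Black => q ^+ o.+1 * x | Domino => q ^+ o.+1 * s end.

Lemma weight_rcons t a off :
  tiling_weight_from x s q off (rcons t a) =
  tiling_weight_from x s q off t * tw (off + tiles_len t) a.
Proof.
elim: t off => [|b t IH] off /=.
  by rewrite /tiles_len /= addn0 mul1r; case: a => /=; rewrite mulr1.
rewrite /tiles_len /= in IH *.
case: b => /=; rewrite IH -?mulrA; congr (_ * (_ * _)); by rewrite addnA ?addn1 ?addn2 -?addSn.
Qed.

Lemma tiles_len_rcons t a : tiles_len (rcons t a) = (tiles_len t + tile_len a)%N.
Proof. by rewrite /tiles_len map_rcons -cats1 sumn_cat /= addn0. Qed.

Lemma tiles_len_ge t : (size t <= tiles_len t)%N.
Proof. elim: t => //= a t IH; rewrite /tiles_len /=; case: a => /=; rewrite -/(tiles_len t); lia. Qed.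

Lemma sum_tuple_rcons k (C : pred (seq tile)) (F : seq tile -> R) :
  \sum_(t : k.+1.-tuple tile | C t) F t =
  \sum_(t : k.-tuple tile) \sum_(a : tile | C (rcons t a)) F (rcons t a).
Proof.
rewrite pair_big_dep /=.
pose h (p : k.-tuple tile * tile) := rcons_tuple p.1 p.2.
pose g (t : k.+1.-tuple tile) :=
  (belast_tuple (thead t) (behead_tuple t), last (thead t) (behead_tuple t)).
rewrite (reindex h) /=; last first.
  exists g => [[t a] _|t _].
    rewrite /g /h /=; case: t => [[|b t'] Ht]; rewrite /thead (tnth_nth a) /=.
      by congr pair; apply: val_inj.
    by congr pair; [apply: val_inj; rewrite /= belast_rcons | rewrite last_rcons].
  rewrite /g /h; apply/val_inj => /=.
  by rewrite -lastI [in RHS](tuple_eta t).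
by [].
Qed.

Definition A m := board_weight x s q m (fun _ => true).
Notation w := (tiling_weight x s q).

Lemma bw_split n P : (0 < n)%N -> board_weight x s q n P =
  \sum_(k < n) \sum_(t : k.-tuple tile) \sum_(a : tile)
    (if (tiles_len t + tile_len a == n)%N && P (rcons t a)
     then w t * tw (tiles_len t) a else 0).
Proof.
move=> n0; rewrite /board_weight big_ord_recl /= big1 ?add0r.
  apply eq_bigr => k _ /=.
  rewrite (sum_tuple_rcons k (fun t => (tiles_len t == n)%N && P t) w).
  apply: eq_bigr => t _; rewrite big_mkcond; apply: eq_bigr => a _.
  by rewrite tiles_len_rcons /tiling_weight weight_rcons add0n.
move=> t; rewrite tuple0 /= /tiles_len /=.
by case: n n0.
Qed.

Lemma L1 m (c : bool) a : tile_len a = 1%N ->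
  \sum_(k < m.+1) \sum_(t : k.-tuple tile)
    (if (tiles_len t + tile_len a == m.+1)%N && c then w t * tw (tiles_len t) a else 0)
  = if c then tw m a * A m else 0.
Proof.
move=> ->.
case: c; last by rewrite big1 // => k _; rewrite big1 // => t _; rewrite andbF.
rewrite /A /board_weight mulr_sumr; apply: eq_bigr => k _.
rewrite mulr_sumr [RHS]big_mkcond; apply: eq_bigr => t _.
rewrite addn1 eqSS andbT; case: eqP => // ->; by rewrite mulrC.
Qed.

Lemma L2 m (c : bool) :
  \sum_(k < m.+2) \sum_(t : k.-tuple tile)
    (if (tiles_len t + tile_len Domino == m.+2)%N && c then w t * tw (tiles_len t) Domino else 0)
  = if c then tw m Domino * A m else 0.
Proof.
rewrite [tile_len _]/=.
rewrite big_ord_recr /= [X in _ + X]big1 ?addr0.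
  case: c; last by rewrite big1 // => k _; rewrite big1 // => t _; rewrite andbF.
  rewrite /A /board_weight mulr_sumr; apply: eq_bigr => k _.
  rewrite mulr_sumr [RHS]big_mkcond; apply: eq_bigr => t _.
  rewrite addn2 !eqSS andbT; case: eqP => // ->; by rewrite mulrC.
move=> t _; have := tiles_len_ge t; rewrite size_tuple addn2 !eqSS.
by case: eqP => // ->; rewrite ltnn.
Qed.

Lemma L2' (c : bool) :
  \sum_(k < 1) \sum_(t : k.-tuple tile)
    (if (tiles_len t + tile_len Domino == 1)%N && c then w t * tw (tiles_len t) Domino else 0) = 0.
Proof. rewrite [tile_len _]/=. by rewrite big1 // => k _; rewrite big1 // => t _; rewrite addn2. Qed.

Lemma bw_rec n P pW pB pD : (0 < n)%N ->
  (forall t, P (rcons t White) = pW) -> (forall t, P (rcons t Black) = pB) ->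
  (forall t, P (rcons t Domino) = pD) ->
  board_weight x s q n P =
    (if pW then x * A n.-1 else 0) + (if pB then q ^+ n * x * A n.-1 else 0)
    + (if pD then (if (1 < n)%N then q ^+ n.-1 * s * A n.-2 else 0) else 0).
Proof.
move=> n0 hW hB hD; rewrite bw_split //.
under eq_bigr do under eq_bigr do rewrite sum_tile hW hB hD.
under eq_bigr do rewrite !big_split.
rewrite !big_split.
case: n n0 => // m _.
rewrite (L1 m pW White) // (L1 m pB Black) //.
clear hW hB hD.
case: m => [|m].
  by rewrite L2'; case: pW; case: pB; case: pD => /=; ring.
rewrite L2 /=.
case: pW; case: pB; case: pD => /=; ring.
Qed.

Lemma A0 : A 0 = 1.
Proof.
rewrite /A /board_weight big_ord1 (big_pred1 [tuple]) //.
by move=> t; rewrite tuple0 /= eqxx.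
Qed.

Lemma A_U m : A m = Uaux x s q m.+1 /\ A m.+1 = Uaux x s q m.+2.
Proof.
elim: m => [|m [IH1 IH2]].
  split; first by rewrite A0.
  rewrite /A (bw_rec 1 (fun _ => true) true true true) //=.
  rewrite -/(A 0) A0 /=; ring.
split=> //.
rewrite /A (bw_rec m.+2 (fun _ => true) true true true) //=.
rewrite -/(A m) -/(A m.+1) IH1 IH2 /=; ring.
Qed.

Lemma TS n : Tpoly x s q n.+2 = (1 + q ^+ n.+1) * x * Tpoly x s q n.+1 + q ^+ n.+1 * s * Tpoly x s q n.
Proof. by []. Qed.
Lemma US n : Uaux x s q n.+2 = (1 + q ^+ n.+1) * x * Uaux x s q n.+1 + q ^+ n * s * Uaux x s q n.
Proof. by []. Qed.

Lemma T_U n : Tpoly x s q n.+1 = x * Uaux x s q n.+1 + q ^+ n * s * Uaux x s q n.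
Proof.
elim/ltn_ind: n => -[|[|n]] IH; try by rewrite /=; ring.
rewrite TS (IH n.+1) // (IH n) // !US !exprS; ring.
Qed.
End Main.

Theorem theorem2p4 (R : realType) (x s q : R) (hq : q != -1) (n : nat)
    (hn : (1 <= n)%N) :
  Tpoly x s q n = board_weight x s q n last_white_or_domino /\
  Tpoly x s q n =
    x * Upoly x s q (n%:Z - 1) + q ^+ n.-1 * s * Upoly x s q (n%:Z - 2).
Proof.
case: n hn => // m _.
have HT := T_U R x s q m.
have HB : board_weight x s q m.+1 last_white_or_domino =
   x * Uaux x s q m.+1 + q ^+ m * s * Uaux x s q m.
  rewrite (bw_rec R x s q m.+1 last_white_or_domino true false true) //;
    try by move=> t; rewrite /last_white_or_domino rev_rcons.
  case: m HT => [|m] HT; rewrite [(_ < _)%N]/=.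
    by rewrite (A0 R x s q) /=; ring.
  rewrite -[m.+2.-1]/(m.+1) -[m.+2.-2]/m -[(1 < m.+2)%N]/true.
  by rewrite (proj1 (A_U R x s q m)) (proj2 (A_U R x s q m)) addr0.
split; first by rewrite HT HB.
rewrite HT.
have -> : (m.+1%:Z - 1 = m%:Z)%R by rewrite -addn1 PoszD addrK.
rewrite -[m.+1.-1]/m.
case: m {HT HB} => [|m].
  by rewrite [Upoly _ _ _ (_ - 2)%R]/Upoly.
have -> : (m.+2%:Z - 2 = m%:Z)%R by rewrite -addn2 PoszD addrK.
by [].
Qed.
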